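(* Let $G$ be a connected graph of order $n\geq 2$ and let $H$ be a graph with $k\geq 1$ connected components $H_1,\dots,H_k$. Then $$\max\{\chi_L(H_t+K_1)\mid 1\leq t\leq k\}\ \leq\ \chi_L(G\odot H)\ \leq\ \chi_L(G)+\sum_{t=1}^{k}\bigl(\chi_L(H_t+K_1)-1\bigr).$$
   Context: All graphs are finite and simple. A $k$-coloring of a connected graph $G$ is a map $c:V(G)\to\{1,\dots,k\}$ with $c(u)\neq c(v)$ for adjacent $u,v$; it induces the partition $\Pi=\{C_1,\dots,C_k\}$ into color classes $C_i=c^{-1}(i)$. The color code of $v$ is $c_\Pi(v)=(d(v,C_1),\dots,d(v,C_k))$ with $d(v,C_i)=\min\{d(v,x): x\in C_i\}$ (graph distance). $c$ is a locating coloring if distinct vertices have distinct color codes; the locating-chromatic number $\chi_L(G)$ is the least $k$ for which a locating $k$-coloring exists. The corona product $G\odot H$ of a graph $G$ with vertex set $\{a_1,\dots,a_n\}$ and a graph $H$ is obtained from one copy of $G$ and $n$ disjoint copies of $H$ by joining $a_i$ to every vertex of the $i$-th copy of $H$. For a graph $F$, $F+K_1$ denotes the join of $F$ with a single new vertex adjacent to all vertices of $F$. *)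

(* Defs.v *)
From mathcomp Require Import all_boot.
Set Implicit Arguments. Unset Strict Implicit. Unset Printing Implicit Defensive.

(* A simple graph is a relation e on a finType, assumed symmetric and
   irreflexive in the theorem. *)

Section Graphs.
Variable T : finType.
Variable e : rel T.

Fixpoint walk_le (n : nat) (u v : T) : bool :=
  if n is n'.+1 then (u == v) || [exists w, e u w && walk_le n' w v]
  else u == v.

(* graph distance: least n with a walk of length <= n (= #|T| if unreachable,
   which never happens in a connected graph) *)
Definition dist (u v : T) : nat := find (fun n => walk_le n u v) (iota 0 #|T|).

Definition connected : Prop := forall u v : T, connect e u v.

(* a k-coloring: proper and onto (color classes form a partition into k classes) *)
Definition proper_coloring k (c : {ffun T -> 'I_k}) : bool :=
  [forall u, forall v, e u v ==> (c u != c v)] && [forall i, exists v, c v == i].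

Definition dist_class k (c : {ffun T -> 'I_k}) (v : T) (i : 'I_k) : nat :=
  \big[minn/#|T|]_(x | c x == i) dist v x.

Definition color_code k (c : {ffun T -> 'I_k}) (v : T) : {ffun 'I_k -> nat} :=
  [ffun i => dist_class c v i].

Definition locating_coloring k (c : {ffun T -> 'I_k}) : bool :=
  proper_coloring c &&
  [forall u, forall v, (color_code c u == color_code c v) ==> (u == v)].

(* locating-chromatic number: least k admitting a locating k-coloring
   (k = #|T| always works via an injective coloring) *)
Definition chiL : nat :=
  find (fun k => [exists c : {ffun T -> 'I_k}, locating_coloring c])
       (iota 0 #|T|.+1).

End Graphs.

(* corona product G ⊙ H : vertices inl a (copy of G) and inr (a, x) (the copy
   of H attached to a) *)
Definition corona (T U : finType) (e : rel T) (f : rel U) : rel (T + (T * U)) :=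
  fun p q =>
    match p, q with
    | inl a, inl b => e a b
    | inr (a, x), inr (b, y) => (a == b) && f x y
    | inl a, inr (b, _) => a == b
    | inr (a, _), inl b => a == b
    end.

Definition comps (U : finType) (f : rel U) : {set {set U}} :=
  [set [set y | connect f x y] | x : U].

(* H[C] + K_1 : induced subgraph on C joined with a new vertex None *)
Definition joinK1 (U : finType) (f : rel U) (C : {set U})
  : rel (option {y : U | y \in C}) :=
  fun p q =>
    match p, q with
    | None, None => false
    | None, Some _ => true
    | Some _, None => true
    | Some x, Some y => f (val x) (val y)
    end.
Arguments joinK1 {U} f C _ _.

(* Main.v *)
Require Import Defs.
From mathcomp Require Import all_boot.
Set Implicit Arguments. Unset Strict Implicit. Unset Printing Implicit Defensive.

Section G.
Variable T : finType.
Variable e : rel T.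

Lemma walk0 u v : walk_le e 0 u v = (u == v). Proof. by []. Qed.

Lemma walk_refl n u : walk_le e n u u.
Proof. by case: n => [|n] /=; rewrite eqxx. Qed.

Lemma walk_mono n m u v : n <= m -> walk_le e n u v -> walk_le e m u v.
Proof.
elim: n m u => [|n IH] [|m] u //=.
- by move=> _ ->.
- rewrite ltnS => le /orP[->//|/existsP[w /andP[ew wv]]].
  apply/orP; right; apply/existsP; exists w; rewrite ew /=; exact: IH wv.
Qed.

Lemma walk_step n u w v : e u w -> walk_le e n w v -> walk_le e n.+1 u v.
Proof. by move=> ew wv /=; apply/orP; right; apply/existsP; exists w; rewrite ew. Qed.

Lemma walk_edge u v : e u v -> walk_le e 1 u v.
Proof. by move=> uv; apply: (walk_step uv); rewrite walk_refl. Qed.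

Lemma walk1 u v : walk_le e 1 u v = (u == v) || e u v.
Proof.
apply/idP/idP => /=.
  by case/orP=> [->//|/existsP[w /andP[ew /eqP <-]]]; rewrite ew orbT.
by case/orP=> [->//|uv]; apply/orP; right; apply/existsP; exists v; rewrite uv eqxx.
Qed.

Lemma walkS_inv n u v : walk_le e n.+1 u v -> u = v \/ exists2 w, e u w & walk_le e n w v.
Proof.
by move=> /= /orP[/eqP->|/existsP[w /andP[ew wv]]]; [left|right; exists w].
Qed.

Lemma walk_connect n u v : walk_le e n u v -> connect e u v.
Proof.
elim: n u => [|n IH] u /=; first by move/eqP->; exact: connect0.
case/orP=> [/eqP->|/existsP[w /andP[ew /IH wv]]]; first exact: connect0.
exact: connect_trans (connect1 ew) wv.
Qed.

Lemma path_walk u p : path e u p -> walk_le e (size p) u (last u p).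
Proof.
elim: p u => [|w p IH] u /=; first by rewrite eqxx.
by case/andP=> uw pw; apply: walk_step uw (IH _ pw).
Qed.

Lemma dist_le_card u v : dist e u v <= #|T|.
Proof. by have := find_size (fun n => walk_le e n u v) (iota 0 #|T|); rewrite size_iota. Qed.

Lemma dist_min n u v : walk_le e n u v -> dist e u v <= n.
Proof.
move=> w; case: (ltnP n #|T|) => [lt|ge]; last exact: leq_trans (dist_le_card u v) ge.
rewrite leqNgt; apply/negP => /(before_find 0).
by rewrite nth_iota // add0n w.
Qed.

Lemma dist_walk_lt u v : dist e u v < #|T| -> walk_le e (dist e u v) u v.
Proof.
move=> lt; have: has (fun n => walk_le e n u v) (iota 0 #|T|) by rewrite has_find size_iota.
move/(nth_find 0); by rewrite nth_iota // add0n.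
Qed.

Lemma dist_lt n u v : walk_le e n u v -> dist e u v < #|T|.
Proof.
move/walk_connect/connectP=> [p pp ->].
case: (shortenP pp) => p' pp' up' _.
have := path_walk pp' => /dist_min le; apply: leq_ltn_trans le _.
have := card_uniqP up'; rewrite /= => h.
by have := max_card (mem (u :: p')); rewrite h.
Qed.

Lemma dist_walk n u v : walk_le e n u v -> walk_le e (dist e u v) u v.
Proof. by move/dist_lt; exact: dist_walk_lt. Qed.
End G.

Definition wR (T : finType) (e : rel T) (Col : eqType) (c : T -> Col) n v i :=
  [exists x, (c x == i) && walk_le e n v x].

Section G2.
Variable T : finType.
Variable e : rel T.
Definition wconn := forall u w : T, exists m, walk_le e m u w.

Lemma wR0 (Col : eqType) (c : T -> Col) v i : wR e c 0 v i = (c v == i).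
Proof.
apply/existsP/idP => [[x /andP[cx]]|cv]; last by exists v; rewrite cv /= eqxx.
by move=> /eqP ->.
Qed.

Lemma wR_mono (Col : eqType) (c : T -> Col) n m v i : n <= m -> wR e c n v i -> wR e c m v i.
Proof.
move=> le /existsP[x /andP[cx w]]; apply/existsP; exists x; rewrite cx; exact: walk_mono w.
Qed.

Lemma dc_split k (c : {ffun T -> 'I_k}) v i n : dist_class e c v i <= n ->
  (#|T| <= n) \/ (exists2 x, c x == i & dist e v x <= n).
Proof.
pose P t := t <= n -> (#|T| <= n) \/ (exists2 x, c x == i & dist e v x <= n).
suff : P (dist_class e c v i) by [].
rewrite /dist_class; apply: big_ind => //.
- by move=> h; left.
- by move=> a b Pa Pb; rewrite /P geq_min => /orP[/Pa|/Pb].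
- by move=> x cx h; right; exists x.
Qed.

Lemma dc_le_dist k (c : {ffun T -> 'I_k}) v i x : c x == i -> dist_class e c v i <= dist e v x.
Proof.
move=> cx; rewrite /dist_class.
suff: forall s, x \in s -> \big[minn/#|T|]_(y <- s | c y == i) dist e v y <= dist e v x.
  by apply; rewrite mem_index_enum.
elim=> [|y s IH] //; rewrite inE big_cons; case/orP=> [/eqP<-|xs]; first by rewrite cx geq_minl.
by case: (c y == i); [rewrite geq_min IH ?orbT | exact: IH].
Qed.

Lemma dc_le k (c : {ffun T -> 'I_k}) v i n : (exists x, c x == i) -> wconn ->
  (dist_class e c v i <= n) = wR e c n v i.
Proof.
move=> [x0 cx0] cn; apply/idP/idP.
  case/dc_split=> [le|[x cx le]].
    have [m w] := cn v x0; apply/existsP; exists x0; rewrite cx0 /=.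
    apply: walk_mono (dist_walk w); exact: leq_trans (dist_le_card _ _ _) le.
  have [m w] := cn v x; apply/existsP; exists x; rewrite cx /=.
  exact: walk_mono (dist_walk w).
case/existsP=> x /andP[cx w]; apply: leq_trans (dc_le_dist v cx) _; exact: dist_min.
Qed.

Definition onto k (c : {ffun T -> 'I_k}) := forall i, exists x, c x == i.

Lemma code_eq k (c : {ffun T -> 'I_k}) u v : onto c -> wconn ->
  color_code e c u = color_code e c v <-> forall n i, wR e c n u i = wR e c n v i.
Proof.
move=> on cn; split.
  by move=> eq n i; rewrite -!dc_le // -!(ffunE (fun i => dist_class e c _ i)) -/(color_code e c _) eq.
move=> h; apply/ffunP => i; rewrite !ffunE; apply/eqP; rewrite eqn_leq.
apply/andP; split.
  by rewrite (dc_le _ _ (on i) cn) h -(dc_le _ _ (on i) cn).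
by rewrite (dc_le _ _ (on i) cn) -h -(dc_le _ _ (on i) cn).
Qed.

Lemma proper_edge k (c : {ffun T -> 'I_k}) u v : proper_coloring e c -> e u v -> c u != c v.
Proof. by case/andP=> /forallP/(_ u)/forallP/(_ v)/implyP. Qed.

Lemma proper_onto k (c : {ffun T -> 'I_k}) : proper_coloring e c -> onto c.
Proof. by case/andP=> _ /forallP h i; apply/existsP; exact: h. Qed.

Lemma loc_wR k (c : {ffun T -> 'I_k}) : locating_coloring e c -> wconn ->
  forall u v, (forall n i, wR e c n u i = wR e c n v i) -> u = v.
Proof.
case/andP=> pc /forallP lc cn u v h; apply/eqP.
have /forallP/(_ v)/implyP := lc u; apply; apply/eqP; apply/code_eq => //.
exact: proper_onto.
Qed.

Lemma chiL_le k (c : {ffun T -> 'I_k}) : locating_coloring e c -> chiL e <= k.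
Proof.
move=> lc; have on : onto c by apply: proper_onto; case/andP: lc.
have kT : k <= #|T|.
  apply: (@leq_trans #|codom c|); last by rewrite (leq_trans (card_size _)) // size_codom.
  rewrite -{1}(card_ord k).
  by apply: subset_leq_card; apply/subsetP => i _; have [x /eqP <-] := on i; apply: codom_f.
rewrite leqNgt; apply/negP => /(before_find 0); rewrite nth_iota ?ltnS // add0n.
by move/negbT/negP; apply; apply/existsP; exists c.
Qed.

Lemma chiL_ex : irreflexive e -> exists c : {ffun T -> 'I_(chiL e)}, locating_coloring e c.
Proof.
move=> irr.
pose p := fun k => [exists c : {ffun T -> 'I_k}, locating_coloring e c].
suff hp : has p (iota 0 #|T|.+1).
  have := nth_find 0 hp; rewrite nth_iota; last by move: hp; rewrite has_find size_iota.
  by rewrite add0n => /existsP.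
apply/hasP; exists #|T|; first by rewrite mem_iota add0n ltnSn.
apply/existsP; exists [ffun x => enum_rank x]; apply/andP; split.
  apply/andP; split.
    apply/forallP=> u; apply/forallP=> v; apply/implyP=> uv; rewrite !ffunE.
    apply/negP=> /eqP/enum_rank_inj eq; by rewrite eq irr in uv.
  by apply/forallP=> i; apply/existsP; exists (enum_val i); rewrite ffunE enum_valK.
apply/forallP=> u; apply/forallP=> v; apply/implyP=> /eqP cd.
have : dist_class e [ffun x => enum_rank x] v (enum_rank u) <= 0.
  move/ffunP: cd => /(_ (enum_rank u)); rewrite !ffunE => <-.
  apply: leq_trans (dc_le_dist _ _) _; first by rewrite ffunE.
  by apply: dist_min; rewrite walk0.
case/dc_split=> [|[x]]; first by rewrite leqn0 => /eqP /card0_eq /(_ u); rewrite inE.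
rewrite ffunE => /eqP/enum_rank_inj -> le.
have : dist e v u < #|T| by apply: (leq_ltn_trans le); apply/card_gt0P; exists u.
by move/dist_walk_lt; move: le; rewrite leqn0 => /eqP -> /eqP ->.
Qed.

Lemma chiL_gen (Col : finType) (c : T -> Col) (x0 : T) :
  (forall u v, e u v -> c u != c v) -> wconn ->
  (forall u v, (forall n i, wR e c n u i = wR e c n v i) -> u = v) ->
  chiL e <= #|[set c x | x in T]|.
Proof.
move=> pr cn lc.
set S := [set c x | x in T].
have Sx0 : c x0 \in S by apply: imset_f.
pose c' := [ffun x => enum_rank_in Sx0 (c x)].
have cS x : c x \in S by apply: imset_f.
have c'E x i : i \in S -> (c' x == enum_rank_in Sx0 i) = (c x == i).
  move=> iS; rewrite ffunE; apply/eqP/eqP => [h|->//].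
  by rewrite -(enum_rankK_in Sx0 (cS x)) h enum_rankK_in.
have on : onto c'.
  move=> i; have : enum_val i \in S by apply: enum_valP.
  case/imsetP=> x _ hx; exists x; by rewrite ffunE -hx enum_valK_in.
apply: (@chiL_le _ c'); apply/andP; split.
  apply/andP; split; last by apply/forallP=> i; apply/existsP; apply: on.
  apply/forallP=> u; apply/forallP=> v; apply/implyP=> uv.
  apply/negP=> /eqP h; move: (pr _ _ uv); rewrite -(c'E u) ?cS // h ffunE eqxx //.
apply/forallP=> u; apply/forallP=> v; apply/implyP=> /eqP h.
have {}h := proj1 (code_eq u v on cn) h.
apply/eqP; apply: lc => n i.
case iS : (i \in S); last first.
  have F w : wR e c n w i = false.
    apply/existsP=> [[x /andP[/eqP cx _]]]; by rewrite -cx cS in iS.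
  by rewrite !F.
have E w : wR e c n w i = wR e c' n w (enum_rank_in Sx0 i).
  by apply: eq_existsb => x; rewrite c'E.
by rewrite !E h.
Qed.
End G2.

Lemma walk_map (T1 T2 : finType) (e1 : rel T1) (e2 : rel T2) (p : T1 -> T2) n u v :
  (forall x y, e1 x y -> p x = p y \/ e2 (p x) (p y)) ->
  walk_le e1 n u v -> walk_le e2 n (p u) (p v).
Proof.
move=> hp; elim: n u => [|n IH] u; first by rewrite !walk0 => /eqP->.
case/walkS_inv=> [->|[w uw /IH wv]]; first exact: walk_refl.
case: (hp _ _ uw) => [->|e2w]; first exact: walk_mono wv.
exact: walk_step e2w wv.
Qed.

Lemma walk_cat (T : finType) (e : rel T) n m u w v :
  walk_le e n u w -> walk_le e m w v -> walk_le e (n + m) u v.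
Proof.
elim: n u => [|n IH] u; first by rewrite walk0 => /eqP->.
case/walkS_inv=> [-> wv|[x ux xw] wv]; first by apply: walk_mono wv; rewrite leq_addl.
by rewrite addSn; apply: walk_step ux (IH _ xw wv).
Qed.

Lemma conn_walk (T : finType) (e : rel T) u v : connect e u v -> exists n, walk_le e n u v.
Proof. by case/connectP=> p pp ->; exists (size p); exact: path_walk. Qed.

Section Cor.
Variables (T U : finType) (e : rel T) (f : rel U).
Notation V := (T + T * U)%type.
Notation cor := (corona e f).

Definition pi (v : V) : T := match v with inl a => a | inr p => p.1 end.

Lemma walk_corG n a b : walk_le cor n (inl a) (inl b) = walk_le e n a b.
Proof.
apply/idP/idP.
  move/(walk_map (p := pi)); apply.
  by move=> [x|[x x']] [y|[y y']] /=; [right | move/eqP->; left | move/eqP->; left | case/andP=> /eqP-> _; left].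
move/(walk_map (p := @inl T (T * U))); apply; by move=> x y; right.
Qed.

Lemma cor_out (P : pred U) n a x v : (forall y z, f y z -> P y -> P z) -> P x ->
  (forall y, P y -> v != inr (a, y)) -> walk_le cor n (inr (a, x)) v ->
  exists2 n', n = n'.+1 & walk_le cor n' (inl a) v.
Proof.
move=> cl Px nv; elim: n x Px => [|n IH] x Px.
  by rewrite walk0 => /eqP eq; move: (nv _ Px); rewrite eq eqxx.
case/walkS_inv=> [eq|[w xw wv]]; first by move: (nv _ Px); rewrite -eq eqxx.
suff: walk_le cor n (inl a) v by exists n.
case: w xw wv => [b /= /eqP<- //|[b y] /= /andP[/eqP<- fxy]].
case/(IH _ (cl _ _ fxy Px)) => n' -> w; apply: walk_mono w; exact: leqnSn.
Qed.

Lemma cor_conn : connected e -> wconn cor.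
Proof.
move=> cn u v.
have [m w] := conn_walk (cn (pi u) (pi v)).
have h1 : walk_le cor 1 u (inl (pi u)).
  by case: u {w} => [a|[a x]]; [exact: walk_refl | apply: walk_edge; rewrite /= eqxx].
have h2 : walk_le cor 1 (inl (pi v)) v.
  by case: v {w h1} => [a|[a x]]; [exact: walk_refl | apply: walk_edge; rewrite /= eqxx].
exists (1 + m + 1); apply: walk_cat h2; apply: walk_cat h1 _; by rewrite walk_corG.
Qed.
End Cor.

Section Low.
Variables (T U : finType) (e : rel T) (f : rel U).
Hypotheses (irre : irreflexive e) (irrf : irreflexive f) (cne : connected e).
Variable a : T.
Variable C : {set U}.
Hypothesis clC : forall y z, f y z -> y \in C -> z \in C.
Notation V := (T + T * U)%type.
Notation cor := (corona e f).
Notation VL := (option {y | y \in C}).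
Notation L := (joinK1 f C).

Definition emb (w : VL) : V := match w with None => inl a | Some s => inr (a, val s) end.

Lemma emb_edge w1 w2 : L w1 w2 -> cor (emb w1) (emb w2).
Proof. by case: w1 w2 => [s1|] [s2|] //= h; rewrite eqxx. Qed.

Lemma L_walk2 u w : walk_le L 2 u w.
Proof.
case: u => [s|]; last first.
  case: w => [t|]; last exact: walk_refl.
  by apply: (@walk_mono _ _ 1); [|apply: walk_edge].
apply: (@walk_step _ _ _ _ None) => //; case: w => [t|]; [exact: walk_edge|exact: walk_refl].
Qed.

Lemma irr_cor : irreflexive cor.
Proof. by case=> [b|[b y]] /=; rewrite ?irre // eqxx irrf. Qed.

Variable K : nat.
Variable c : {ffun V -> 'I_K}.
Hypothesis lc : locating_coloring cor c.
Let cl := fun w : VL => c (emb w).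

Lemma LOC n (p : {y | y \in C}) i : (exists w, cl w == i) ->
  wR cor c n (inr (a, val p)) i = wR L cl n (Some p) i.
Proof.
move=> [w cw]; apply/idP/idP; last first.
  case/existsP=> z /andP[cz wz]; apply/existsP; exists (emb z); rewrite cz /=.
  by apply: (walk_map (p := emb) _ wz) => x y /emb_edge; right.
case/existsP=> z /andP[cz wz].
have base : z = inr (a, val p) -> wR L cl n (Some p) i.
  move=> ez; apply/existsP; exists (Some p); rewrite /cl /= -ez cz; exact: walk_refl.
case: n wz base => [|[|n]] wz base.
- by apply: base; apply/eqP; rewrite eq_sym.
- rewrite walk1 in wz; case/orP: wz => [/eqP ez|ez]; first by apply: base.
  case: z cz ez {base} => [b|[b y]] cz /=.
    move/eqP=> eab; apply/existsP; exists None; apply/andP; split.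
      by rewrite /cl /emb eab.
    by apply: walk_edge.
  case/andP=> /eqP eab fy; have yC := clC fy (valP p).
  apply/existsP; exists (Some (exist _ y yC)); apply/andP; split.
    by rewrite /cl /emb /= eab.
  by apply: walk_edge.
- apply/existsP; exists w; rewrite cw; apply: walk_mono (L_walk2 _ _); done.
Qed.

Lemma NLOC n (p : {y | y \in C}) i : ~~ [exists w, cl w == i] ->
  wR cor c n (inr (a, val p)) i = (0 < n) && wR cor c n.-1 (inl a) i.
Proof.
move=> nu; apply/idP/idP.
  case/existsP=> z /andP[cz wz].
  have nz : forall y, y \in C -> z != inr (a, y).
    move=> y yC; apply/eqP=> ez; move/negP: nu; apply; apply/existsP.
    by exists (Some (exist _ y yC)); rewrite /cl /= -ez.
  have [n' -> wz'] := cor_out (P := fun y => y \in C) clC (valP p) nz wz.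
  by apply/existsP; exists z; rewrite cz wz'.
case: n => // n /= /existsP[z /andP[cz wz]]; apply/existsP; exists z; rewrite cz.
by apply: walk_step wz; rewrite /= eqxx.
Qed.

Lemma lower_main : chiL L <= K.
Proof.
have cnc := cor_conn f cne.
have pc : proper_coloring cor c by case/andP: lc.
apply: leq_trans (@chiL_gen _ _ _ cl None _ _ _) _.
- by move=> u v uv; apply: proper_edge pc (emb_edge uv).
- by move=> u v; exists 2; exact: L_walk2.
- move=> u v h; case: u h => [p|]; case: v => [q|] h //.
  + have : inr (a, val p) = inr (a, val q) :> V.
      apply: (loc_wR lc cnc) => n i.
      case: (boolP [exists w, cl w == i]) => [/existsP ui|nu].
        by rewrite !LOC //; exact: h.
      by rewrite !NLOC.
    by case=> /val_inj ->.
  + have := h 0 (cl None); rewrite !wR0 eqxx => /eqP eq.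
    have pe : cl (Some p) != cl None := proper_edge pc (emb_edge (w1 := Some p) (w2 := None) erefl).
    by rewrite eq eqxx in pe.
  + have := h 0 (cl None); rewrite !wR0 eqxx => /esym/eqP eq.
    have pe : cl (Some q) != cl None := proper_edge pc (emb_edge (w1 := Some q) (w2 := None) erefl).
    by rewrite eq eqxx in pe.
- by rewrite -[X in _ <= X]card_ord; exact: max_card.
Qed.
End Low.

Lemma chiL_le_card (T : finType) (e : rel T) : chiL e <= #|T|.+1.
Proof. by have := find_size (fun k => [exists c : {ffun T -> 'I_k}, locating_coloring e c]) (iota 0 #|T|.+1); rewrite size_iota. Qed.

Section Up.
Variables (T U : finType) (e : rel T) (f : rel U).
Hypotheses (irre : irreflexive e) (irrf : irreflexive f) (symf : symmetric f) (cne : connected e).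
Notation V := (T + T * U)%type.
Notation cor := (corona e f).
Notation L C := (joinK1 f C).

Definition comp (x : U) : {set U} := [set y | connect f x y].

Lemma comp_in x : x \in comp x.
Proof. by rewrite inE connect0. Qed.

Lemma comp_sym x y : y \in comp x -> comp y = comp x.
Proof.
rewrite inE => cxy; apply/setP=> z; rewrite !inE; apply/idP/idP.
  exact: connect_trans.
by move=> cxz; apply: connect_trans cxz; rewrite (sym_connect_sym symf).
Qed.

Lemma comp_cl x y z : f y z -> y \in comp x -> z \in comp x.
Proof. by rewrite !inE => fyz cxy; apply: connect_trans cxy (connect1 fyz). Qed.

Lemma irrL C : irreflexive (L C).
Proof. by case=> [s|] //=; exact: irrf. Qed.

Variable c0 : {ffun T -> 'I_(chiL e)}.
Hypothesis lc0 : locating_coloring e c0.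
Variable cC : forall C : {set U}, {ffun option {y | y \in C} -> 'I_(chiL (L C))}.
Hypothesis lcC : forall C, locating_coloring (L C) (cC C).

Definition gC (C : {set U}) (y : U) : nat :=
  if (insub y : option {z | z \in C}) is Some s then val (cC C (Some s)) else 0.

Lemma gCE (C : {set U}) (s : {y | y \in C}) : gC C (val s) = cC C (Some s).
Proof. by rewrite /gC valK. Qed.

Local Notation M := (#|U|.+2).

Lemma chiLM C : chiL (L C) <= M.
Proof.
apply: leq_trans (chiL_le_card _) _; rewrite card_option card_sig ltnS ltnS.
exact: max_card.
Qed.

Lemma inord_injM (m n : nat) : m < M -> n < M -> (inord m : 'I_M) = inord n -> m = n.
Proof. by move=> hm hn h; have := congr1 (@nat_of_ord _) h; rewrite !inordK. Qed.

Definition Col := ('I_(chiL e) + ({set U} * 'I_M))%type.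

Definition col (v : V) : Col :=
  match v with inl a => inl (c0 a) | inr (a, x) => inr (comp x, inord (gC (comp x) x)) end.

Lemma colS (C : {set U}) (t : {z | z \in C}) b : comp (val t) = C ->
  col (inr (b, val t)) = inr (C, inord (cC C (Some t))).
Proof. by move=> ht; rewrite /= ht gCE. Qed.

Lemma U1 n a i : wR cor col n (inl a) (inl i) = wR e c0 n a i.
Proof.
apply/existsP/existsP => [[[b|[b y]] /andP[cb w]]|[b /andP[cb w]]] //.
  by exists b; rewrite -(walk_corG _ f) w andbT; move: cb => /eqP [->].
by exists (inl b); rewrite walk_corG w andbT /= (eqP cb).
Qed.

Lemma U2 n a x i : wR cor col n.+1 (inr (a, x)) (inl i) = wR cor col n (inl a) (inl i).
Proof.
apply/existsP/existsP => [[z /andP[cz wz]]|[z /andP[cz wz]]].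
  have nz : forall y, predT y -> z != inr (a, y).
    by move=> y _; apply/eqP=> ez; move: cz; rewrite ez.
  have [n' [<-] wz'] := cor_out (P := predT) (fun _ _ _ _ => isT) isT nz wz.
  by exists z; rewrite cz.
by exists z; rewrite cz; apply: walk_step wz; rewrite /= eqxx.
Qed.

Lemma U3 n a (C : {set U}) (s : {z | z \in C}) (j : 'I_(chiL (L C))) :
  comp (val s) = C -> j != cC C None ->
  wR cor col n (inr (a, val s)) (inr (C, inord j)) = wR (L C) (cC C) n (Some s) j.
Proof.
move=> hs jn.
have clC y z : f y z -> y \in C -> z \in C by rewrite -hs; exact: comp_cl.
have ht (t : {z | z \in C}) : comp (val t) = C.
  by rewrite -[RHS]hs; apply: comp_sym; rewrite hs (valP t).
have hcol (t : {z | z \in C}) b : (col (inr (b, val t)) == inr (C, inord j)) = (cC C (Some t) == j).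
  rewrite (colS _ (ht t)); apply/eqP/eqP => [[]|->//].
  by move/inord_injM => h; apply/val_inj/h; apply: leq_trans (chiLM C).
apply/idP/idP; last first.
  case/existsP=> [[t|] /andP[ct wt]]; last by rewrite (eqP ct) eqxx in jn.
  apply/existsP; exists (emb a (Some t)); rewrite /= (hcol t a) (eqP ct) eqxx /=.
  by apply: (walk_map (p := emb a (C := C)) _ wt) => x y /(emb_edge e); right.
case/existsP=> z /andP[cz wz].
case: n wz => [|[|n]] wz.
- move: wz; rewrite walk0 => /eqP ez; rewrite -ez hcol in cz.
  by apply/existsP; exists (Some s); rewrite cz walk_refl.
- rewrite walk1 in wz; case/orP: wz => [/eqP ez|].
    rewrite -ez hcol in cz.
    by apply/existsP; exists (Some s); rewrite cz walk_refl.
  case: z cz => [b|[b y]] // cz /= /andP[/eqP eab fy].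
  have yC := clC _ _ fy (valP s).
  have := hcol (exist _ y yC) b; rewrite /= cz => /esym cy.
  apply/existsP; exists (Some (exist _ y yC)); rewrite cy; exact: walk_edge.
- have [w cw] := proper_onto (proj1 (andP (lcC C))) j.
  by apply/existsP; exists w; rewrite cw; apply: walk_mono (L_walk2 _ _ _).
Qed.

Lemma U3' n (C : {set U}) (s : {z | z \in C}) :
  wR (L C) (cC C) n (Some s) (cC C None) = (0 < n).
Proof.
case: n => [|n].
  rewrite wR0; apply/negbTE.
  exact: proper_edge (proj1 (andP (lcC C))) (_ : L C (Some s) None).
apply/existsP; exists None; apply/andP; split => //.
by apply: (@walk_mono _ _ 1); [|apply: walk_edge].
Qed.

Lemma col_loc u v : (forall n i, wR cor col n u i = wR cor col n v i) -> u = v.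
Proof.
move=> h.
have cnG : wconn e by move=> x y; apply: conn_walk.
have hG x y : (forall n i, wR e c0 n x i = wR e c0 n y i) -> x = y.
  by move=> hh; exact: (loc_wR lc0 cnG hh).
have hc : col v == col u.
  by have := h 0 (col u); rewrite !wR0 eqxx; case: (col v == col u).
case: u v h hc => [a|[a x]] [b|[b y]] h hc //=.
- by congr inl; apply: hG => n i; rewrite -!U1; exact: h.
- move: hc => /eqP [ecomp _].
  have eab : a = b by apply: hG => n i; rewrite -!U1 -(U2 _ _ x) -(U2 _ _ y); exact: h.
  subst b.
  have yC : y \in comp x by rewrite -ecomp comp_in.
  pose sx : {z | z \in comp x} := exist _ x (comp_in x).
  pose sy : {z | z \in comp x} := exist _ y yC.
  suff : Some sx = Some sy by move=> [] ->.
  apply: (loc_wR (lcC (comp x))) => [u w|n j]; first by exists 2; apply: L_walk2.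
  case: (eqVneq j (cC (comp x) None)) => [->|jn]; first by rewrite !U3'.
  rewrite -(@U3 n a _ sx j erefl jn) -(@U3 n a _ sy j ecomp jn); exact: h.
Qed.

Definition SC C : {set Col} :=
  [set (inr (C, inord (val j)) : Col) | j in [set~ cC C None]].

Lemma card_bigcup_le (I : finType) (P : pred I) (F : I -> {set Col}) :
  #|\bigcup_(i | P i) F i| <= \sum_(i | P i) #|F i|.
Proof.
apply: (@big_ind2 {set Col} nat (fun X n => #|X| <= n)) => [|X1 n1 X2 n2 h1 h2|i _].
- by rewrite cards0.
- by apply: leq_trans ((leq_card_setU _ _).1) _; exact: leq_add.
- by [].
Qed.

Lemma col_count : #|[set col v | v : V]| <= chiL e + \sum_(C in comps f) (chiL (L C) - 1).
Proof.
set SG : {set Col} := [set (inl i : Col) | i : 'I_(chiL e)].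
have sub : [set col v | v : V] \subset SG :|: \bigcup_(C in comps f) SC C.
  apply/subsetP => _ /imsetP [[b|[b x]] _ ->].
    by rewrite inE; apply/orP; left; apply: imset_f.
  rewrite inE; apply/orP; right; apply/bigcupP; exists (comp x); first exact: imset_f.
  pose sx : {z | z \in comp x} := exist _ x (comp_in x).
  rewrite (colS b (t := sx)) //; apply/imsetP; exists (cC (comp x) (Some sx)) => //.
  rewrite !inE; exact: proper_edge (proj1 (andP (lcC _))) (_ : L _ (Some sx) None).
apply: leq_trans (subset_leq_card sub) _.
apply: leq_trans ((leq_card_setU _ _).1) _; apply: leq_add.
  by apply: leq_trans (leq_imset_card _ _) _; rewrite card_ord.
apply: leq_trans (card_bigcup_le _ _) _; apply: leq_sum => C _.
apply: leq_trans (leq_imset_card _ _) _; by rewrite cardsC1 card_ord subn1.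
Qed.

Lemma upper_main (a0 : T) : chiL cor <= chiL e + \sum_(C in comps f) (chiL (L C) - 1).
Proof.
apply: leq_trans col_count.
apply: (@chiL_gen _ _ _ col (inl a0)).
- case=> [a|[a x]] [b|[b y]] h.
  + by apply: (contraNneq _ (proper_edge (proj1 (andP lc0)) h)) => -[->].
  + by [].
  + by [].
  + have /andP[/eqP eab fxy] : (a == b) && f x y := h; subst b.
    have yC : y \in comp x by rewrite inE connect1.
    pose sx : {z | z \in comp x} := exist _ x (comp_in x).
    pose sy : {z | z \in comp x} := exist _ y yC.
    rewrite (colS a (t := sx)) // (colS a (t := sy)) ?(comp_sym yC) //.
    apply/negP=> /eqP [] /inord_injM.
    rewrite !(leq_trans (ltn_ord _) (chiLM _)) => /(_ isT isT) /val_inj eq.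
    have pe : cC (comp x) (Some sx) != cC (comp x) (Some sy) := proper_edge (proj1 (andP (lcC (comp x)))) (fxy : L (comp x) (Some sx) (Some sy)).
    by rewrite eq eqxx in pe.
- exact: cor_conn.
- exact: col_loc.
Qed.
End Up.

Theorem theorem1 (T U : finType) (e : rel T) (f : rel U) :
  symmetric e -> irreflexive e -> symmetric f -> irreflexive f ->
  connected e -> 2 <= #|T| -> 0 < #|U| ->
  \max_(C in comps f) chiL (joinK1 f C) <= chiL (corona e f) /\
  chiL (corona e f) <= chiL e + \sum_(C in comps f) (chiL (joinK1 f C) - 1).
Proof.
move=> syme irre symf irrf cne hT hU.
have /card_gt0P [a0 _] : 0 < #|T| by apply: leq_trans hT.
split.
- apply/bigmax_leqP => C /imsetP [x _ ->].
  have [c lc] := chiL_ex (irr_cor irre irrf).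
  apply: (lower_main cne a0 _ lc).
  move=> y z fyz; rewrite !inE => cxy; exact: connect_trans cxy (connect1 fyz).
- have [c0 lc0] := chiL_ex irre.
  pose cC := fun C : {set U} => xchoose (chiL_ex (irrL irrf (C := C))).
  have lcC : forall C, locating_coloring (joinK1 f C) (cC C).
    by move=> C; exact: xchooseP.
  exact: (upper_main symf cne lc0 lcC a0).
Qed.
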